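(* Let $n\ge 4$, and let $u,v$ be two vertices of the cycle $C_n$ that are not adjacent in $C_n$. Then $\mathscr{Z}^{\rm TAR}(C_n)=\mathscr{Z}^{\rm TAR}(C_n+uv)$; in fact $C_n$ and $C_n+uv$ have exactly the same zero forcing sets.
   Context: $C_n+uv$ is the graph on $V(C_n)$ with edge set $E(C_n)\cup\{uv\}$. Zero forcing: starting with a set $S$ of blue vertices, a blue vertex $v$ may turn blue a white vertex $w$ if $w$ is the only white neighbor of $v$; $S$ is a zero forcing set if repeated application colors all vertices blue. $\mathscr{Z}^{\rm TAR}(G)$ has vertices the zero forcing sets of $G$, two adjacent iff their symmetric difference has size 1. *)

(* Defs.v *)
From mathcomp Require Import all_boot.
Set Implicit Arguments. Unset Strict Implicit. Unset Printing Implicit Defensive.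

Definition cycle_rel (n : nat) : rel 'I_n :=
  fun i j => (val j == (val i).+1 %% n) || (val i == (val j).+1 %% n).

Definition add_edge (T : eqType) (e : rel T) (u v : T) : rel T :=
  fun x y => [|| e x y, (x == u) && (y == v) | (x == v) && (y == u)].

(* Zero forcing: B is reachable from S by a sequence of color-change steps,
   where a blue v turns blue a white w when w is the only white neighbor of v. *)
Inductive zf_reach (T : finType) (e : rel T) (S : {set T}) : {set T} -> Prop :=
| zf_start : zf_reach e S S
| zf_force : forall (B : {set T}) (v w : T),
    zf_reach e S B -> v \in B -> w \notin B -> e v w ->
    (forall x, e v x -> x != w -> x \in B) ->
    zf_reach e S (w |: B).

Definition zero_forcing_set (T : finType) (e : rel T) (S : {set T}) : Prop :=
  zf_reach e S [set: T].

Definition ZTAR_vertex (T : finType) (e : rel T) (S : {set T}) : Prop :=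
  zero_forcing_set e S.

Definition ZTAR_adj (T : finType) (e : rel T) (S1 S2 : {set T}) : Prop :=
  [/\ zero_forcing_set e S1, zero_forcing_set e S2 &
      #|(S1 :\: S2) :|: (S2 :\: S1)| = 1].

(* Main.v *)
Require Import Defs.
From mathcomp Require Import all_boot zify.
Set Implicit Arguments. Unset Strict Implicit. Unset Printing Implicit Defensive.

Definition off n (c i : nat) := if c <= i then i - c else i + n - c.
Lemma offP n c i : c < n -> i < n -> off n c i < n /\ (c + off n c i = i \/ c + off n c i = i + n).
Proof. rewrite /off; case: (leqP c i) => h; lia. Qed.
Lemma modS (n i : nat) : i < n -> (i.+1 %% n = i.+1 /\ i.+1 < n) \/ (i.+1 %% n = 0 /\ i.+1 = n).
Proof. move=> H; case: (ltngtP i.+1 n) => h. left; rewrite modn_small //. lia. right; rewrite h modnn //. Qed.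

Lemma cycP n (i j : 'I_n) : cycle_rel i j ->
  (nat_of_ord j = (nat_of_ord i).+1 \/ (nat_of_ord j = 0 /\ (nat_of_ord i).+1 = n)) \/
  (nat_of_ord i = (nat_of_ord j).+1 \/ (nat_of_ord i = 0 /\ (nat_of_ord j).+1 = n)).
Proof.
rewrite /cycle_rel => /orP [/eqP /= h|/eqP /= h]; [left|right].
  have := modS (ltn_ord i); move: h; move: (_ %% n) => m; lia.
have := modS (ltn_ord j); move: h; move: (_ %% n) => m; lia.
Qed.

Lemma cycI n (i j : 'I_n) : (nat_of_ord j = (nat_of_ord i).+1 \/ (nat_of_ord j = 0 /\ (nat_of_ord i).+1 = n)) -> cycle_rel i j.
Proof. move=> h; rewrite /cycle_rel; apply/orP; left; apply/eqP => /=; have := modS (ltn_ord i); have := ltn_ord j; move: (_ %% n) => m; lia. Qed.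

Lemma cyc_sym n (i j : 'I_n) : cycle_rel i j -> cycle_rel j i.
Proof. by rewrite /cycle_rel orbC. Qed.

Lemma mkv n j : j < n -> exists x : 'I_n, nat_of_ord x = j.
Proof. by move=> h; exists (Ordinal h). Qed.

Lemma offex n (c : 'I_n) k : k < n -> exists y : 'I_n, off n c y = k.
Proof.
move=> hk; have hc := ltn_ord c.
case: (ltnP (c + k) n) => h.
  have [y hy] := mkv h; exists y; have := offP hc (ltn_ord y); lia.
have h2 : c + k - n < n by lia.
have [y hy] := mkv h2; exists y; have := offP hc (ltn_ord y); lia.
Qed.

Lemma off_inj n (c i j : 'I_n) : off n c i = off n c j -> i = j.
Proof.
move=> h; apply: ord_inj.
have := offP (ltn_ord c) (ltn_ord i); have := offP (ltn_ord c) (ltn_ord j); have := ltn_ord i; have := ltn_ord j; lia.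
Qed.

Definition arc n (c : 'I_n) k := [set i : 'I_n | off n c i <= k].

Lemma zf_mono (T : finType) (e : rel T) (S S' B : {set T}) :
  zf_reach e S B -> S \subset S' -> zf_reach e S' (B :|: S').
Proof.
move=> hB sS; elim: hB => [|B0 v w _ IH vB wB evw hx].
  rewrite (setUidPr sS); exact: zf_start.
case: (boolP (w \in S')) => wS.
  by rewrite -setUA (setUidPr _) // sub1set inE wS orbT.
rewrite -setUA; apply: (zf_force (v:=v)) => //.
- by rewrite inE vB.
- by rewrite inE negb_or wB.
- by move=> x ex nx; rewrite inE hx.
Qed.

Lemma zf_first (T : finType) (e : rel T) (S B : {set T}) : zf_reach e S B ->
  B = S \/ exists v w, [/\ v \in S, w \notin S, e v w & forall x, e v x -> x != w -> x \in S].
Proof.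
elim => [|B0 v w _ IH vB wB evw hx]; first by left.
right; case: IH => [E|]; last by [].
by subst; exists v, w.
Qed.

Definition haspair n (S : {set 'I_n}) := exists a b, [/\ cycle_rel a b, a \in S & b \in S].

Definition sandw n (e : rel 'I_n) (u v : 'I_n) :=
  (forall x y, cycle_rel x y -> e x y) /\ (forall x y, e x y -> add_edge (@cycle_rel n) u v x y).

Lemma zf_pair n (e : rel 'I_n) u v S : 3 <= n -> sandw e u v ->
  zero_forcing_set e S -> haspair S.
Proof.
move=> hn [ce _] /zf_first [E|[x [w [xS wS exw hx]]]].
  have h0 : 0 < n by lia. have h1 : 1 < n by lia.
  exists (Ordinal h0), (Ordinal h1); rewrite -E !inE; split => //.
  by apply: cycI => /=; left.
have hxn := ltn_ord x.
have [s hs] : exists s : 'I_n, nat_of_ord s = if (nat_of_ord x).+1 == n then 0 else (nat_of_ord x).+1.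
  apply: mkv; case: eqP; lia.
have [p hp] : exists p : 'I_n, nat_of_ord p = if nat_of_ord x == 0 then n.-1 else (nat_of_ord x).-1.
  apply: mkv; case: eqP; lia.
have cxs : cycle_rel x s by apply: cycI; move: hs; case: eqP; lia.
have cpx : cycle_rel p x by apply: cycI; move: hp; case: eqP; lia.
have nsp : s != p.
  apply/negP => /eqP sp; move: hs hp; rewrite sp; case: eqP; case: eqP; lia.
case: (eqVneq s w) => sw.
  exists p, x; split => //; apply: hx; first by apply: ce; apply: cyc_sym.
  by rewrite -sw eq_sym.
by exists x, s; split => //; apply: hx => //; apply: ce.
Qed.

Lemma off_self n (c : nat) : off n c c = 0.
Proof. by rewrite /off leqnn subnn. Qed.

Lemma zf_step n (e : rel 'I_n) u v (S : {set 'I_n}) (c : 'I_n) k :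
  u != v -> sandw e u v -> zf_reach e S (arc c k) -> 0 < k -> k.+2 <= n ->
  exists c' : 'I_n, zf_reach e S (arc c' k.+1).
Proof.
move=> uv [ce ec] hB k0 kn.
have hc := ltn_ord c.
have [y hy] : exists y : 'I_n, off n c y = k by apply: offex; lia.
have [z hz] : exists z : 'I_n, off n c z = k.+1 by apply: offex; lia.
have [p hp] : exists p : 'I_n, off n c p = n.-1 by apply: offex; lia.
have inA : forall i, (i \in arc c k) = (off n c i <= k) by move=> i; rewrite inE.
have offc := off_self n c.
have yc : y != c by apply/eqP => E; move: hy; rewrite E offc; lia.
pose H1 := ((y == u) ==> (v \in arc c k)) && ((y == v) ==> (u \in arc c k)).
pose H2 := ((c == u) ==> (v \in arc c k)) && ((c == v) ==> (u \in arc c k)).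
have Q1 : H1 -> forall x, e y x -> x != z -> x \in arc c k.
  move=> /andP [h1 h2] x /ec /or3P [cyx | /andP[/eqP yu /eqP xv] | /andP[/eqP yv /eqP xu]] xz.
  - rewrite inA; have hxz : off n c x <> k.+1.
      move=> h; move/eqP: xz; apply; apply: (off_inj (c:=c)). by rewrite hz; exact: h.
    have F := cycP cyx; have Fy := offP hc (ltn_ord y); have Fx := offP hc (ltn_ord x).
    have := ltn_ord x; have := ltn_ord y; clear -F Fy Fx hy hxz k0 kn hc; lia.
  - by subst; rewrite eqxx in h1.
  - by subst; rewrite eqxx in h2.
have Q2 : H2 -> forall x, e c x -> x != p -> x \in arc c k.
  move=> /andP [h1 h2] x /ec /or3P [cyx | /andP[/eqP yu /eqP xv] | /andP[/eqP yv /eqP xu]] xz.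
  - rewrite inA; have hxz : off n c x <> n.-1.
      by move=> h; move/eqP: xz; apply; apply: (off_inj (c:=c)); rewrite hp; exact: h.
    have F := cycP cyx; have Fx := offP hc (ltn_ord x).
    have := ltn_ord x; clear -F Fx hxz k0 kn hc; lia.
  - by subst; rewrite eqxx in h1.
  - by subst; rewrite eqxx in h2.
have : H1 \/ H2.
  case: (eqVneq y u) => [yu|yu].
    subst y; case: (eqVneq c v) => [cv|cv].
      left; apply/andP; split; apply/implyP => /eqP h.
        by rewrite -cv inA offc.
      by move: uv; rewrite h eqxx.
    right; apply/andP; split; apply/implyP => /eqP h.
      by move: yc; rewrite h eqxx.
    by move: cv; rewrite h eqxx.
  case: (eqVneq y v) => [yv|yv].
    subst y; case: (eqVneq c u) => [cu|cu].
      left; apply/andP; split; apply/implyP => h.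
        by move: yu; rewrite (eqP h) eqxx.
      by rewrite -cu inA offc.
    right; apply/andP; split; apply/implyP => /eqP h.
      by move: cu; rewrite h eqxx.
    by move: yc; rewrite h eqxx.
  by left; apply/andP; split; apply/implyP => /eqP h; [move: yu|move: yv]; rewrite h eqxx.
case=> [/Q1 q|/Q2 q].
  exists c.
  have -> : arc c k.+1 = z |: arc c k.
    apply/setP => i; rewrite !inE; case: (eqVneq i z) => [->|iz] /=.
      by rewrite hz leqnn.
    have : off n c i <> k.+1.
      by move=> h; move/eqP: iz; apply; apply: (off_inj (c:=c)); rewrite hz; exact: h.
    move=> h; have Fi := offP hc (ltn_ord i); clear -h Fi; apply/idP/idP; lia.
  apply: (zf_force (v:=y)) => //.
  - by rewrite inA hy.
  - by rewrite inA hz; clear; lia.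
  - apply: ce; apply: cycI.
    have Fy := offP hc (ltn_ord y); have Fz := offP hc (ltn_ord z).
    have := ltn_ord z; have := ltn_ord y; clear -Fy Fz hy hz hc kn; lia.
exists p.
have -> : arc p k.+1 = p |: arc c k.
  apply/setP => i; rewrite !inE; case: (eqVneq i p) => [->|ip] /=.
    by rewrite off_self.
  have : off n c i <> n.-1.
    by move=> h; move/eqP: ip; apply; apply: (off_inj (c:=c)); rewrite hp; exact: h.
  have F1 := offP (ltn_ord p) (ltn_ord i); have F2 := offP hc (ltn_ord i).
  have F3 := offP hc (ltn_ord p); have L1 := ltn_ord p; have L2 := ltn_ord i.
  move=> h; clear -F1 F2 F3 L1 L2 h hp kn hc; apply/idP/idP; lia.
apply: (zf_force (v:=c)) => //.
- by rewrite inA offc.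
- by rewrite inA hp; lia.
- apply: ce; apply: cyc_sym; apply: cycI.
  have F := offP hc (ltn_ord p); have := ltn_ord p; clear -F hp hc kn; lia.
Qed.

Lemma zf_grow n (e : rel 'I_n) u v (S : {set 'I_n}) (c : 'I_n) :
  u != v -> sandw e u v -> zf_reach e S (arc c 1) ->
  forall k, 0 < k -> k < n -> exists c' : 'I_n, zf_reach e S (arc c' k).
Proof.
move=> uv sw h0; elim=> // k IH _ kn.
case: (posnP k) => [->|kp]; first by exists c.
have [c' hc'] := IH kp (ltnW kn).
exact: (zf_step uv sw hc' kp kn).
Qed.

Lemma arc_full n (c : 'I_n) : arc c n.-1 = setT.
Proof.
apply/setP => i; rewrite !inE; have F := offP (ltn_ord c) (ltn_ord i).
have := ltn_ord i; clear -F; lia.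
Qed.

Lemma pair_arc n (S : {set 'I_n}) : 1 < n -> haspair S -> exists c : 'I_n, arc c 1 \subset S.
Proof.
move=> hn.
have key : forall a b : 'I_n, (nat_of_ord b = (nat_of_ord a).+1 \/ (nat_of_ord b = 0 /\ (nat_of_ord a).+1 = n)) ->
   a \in S -> b \in S -> arc a 1 \subset S.
  move=> a b hab aS bS; apply/subsetP => i; rewrite inE => hi.
  have hb : off n a b = 1.
    have F := offP (ltn_ord a) (ltn_ord b); have := ltn_ord b; have := ltn_ord a.
    clear -F hab hn; lia.
  have : off n a i = 0 \/ off n a i = 1 by clear -hi; lia.
  case=> h.
    suff -> : i = a by [].
    by apply: (off_inj (c:=a)); rewrite off_self; exact: h.
  suff -> : i = b by [].
  by apply: (off_inj (c:=a)); rewrite hb; exact: h.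
case=> a [b [cab aS bS]].
case: (cycP cab) => h; [exists a; exact: key h aS bS|exists b; exact: key h bS aS].
Qed.

Lemma zf_char n (e : rel 'I_n) u v (S : {set 'I_n}) : 3 <= n -> u != v -> sandw e u v ->
  zero_forcing_set e S <-> haspair S.
Proof.
move=> hn uv sw; split; first by apply: zf_pair hn sw.
have n1 : 1 < n by lia.
move=> /(pair_arc n1) [c sc].
have h0 : zf_reach e (arc c 1) (arc c 1) by exact: zf_start.
have p1 : 0 < n.-1 by lia.
have p2 : n.-1 < n by lia.
have [c' hc'] := zf_grow uv sw h0 p1 p2.
rewrite arc_full in hc'.
have := zf_mono hc' sc; rewrite setTU; exact.
Qed.

Theorem proposition2p30 (n : nat) (u v : 'I_n) :
  4 <= n -> u != v -> ~~ cycle_rel u v ->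
  (* same zero forcing sets *)
  (forall S : {set 'I_n},
      zero_forcing_set (@cycle_rel n) S <->
      zero_forcing_set (add_edge (@cycle_rel n) u v) S) /\
  (* hence Z^TAR(C_n) = Z^TAR(C_n + uv): same vertices and same edges *)
  (forall S : {set 'I_n},
      ZTAR_vertex (@cycle_rel n) S <-> ZTAR_vertex (add_edge (@cycle_rel n) u v) S) /\
  (forall S1 S2 : {set 'I_n},
      ZTAR_adj (@cycle_rel n) S1 S2 <-> ZTAR_adj (add_edge (@cycle_rel n) u v) S1 S2).
Proof.
move=> hn uv _.
have s1 : sandw (@cycle_rel n) u v by split => // x y h; rewrite /add_edge h.
have s2 : sandw (add_edge (@cycle_rel n) u v) u v by split => // x y h; rewrite /add_edge h.
have n3 : 3 <= n by lia.
have E : forall S, zero_forcing_set (@cycle_rel n) S <-> zero_forcing_set (add_edge (@cycle_rel n) u v) S.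
  by move=> S; rewrite (zf_char S n3 uv s1) (zf_char S n3 uv s2).
split; first exact: E.
split; first exact: E.
move=> S1 S2; rewrite /ZTAR_adj; split; case=> a b c; split => //; by apply/E.
Qed.
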